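(* Let $f$ be a $2\pi$-periodic continuous function with $f\in\mathrm{Lip}(\alpha)$, $0<\alpha\le1$, i.e. its modulus of continuity satisfies $\omega(\delta)=\mathcal{O}(\delta^{\alpha})$. Let $\{p_k\}_{k\ge0}$ be non-negative numbers with $P_n:=\sum_{k=0}^n p_k\ne0$ for all $n$, let $a_{n,k}=p_k/P_n$ for $0\le k\le n$ and $a_{n,k}=0$ otherwise, and suppose that for some $\beta\ge0$ \[ \sum_{k=0}^{m-1}(k+1)^{\beta}\left|\frac{a_{n,k}}{(k+1)^{\beta}}-\frac{a_{n,k+1}}{(k+2)^{\beta}}\right|=\mathcal{O}(a_{n,m}) \] for all $0\le m\le n$, $n=0,1,\dots$. Let $R_n(f;x):=\frac{1}{P_n}\sum_{k=0}^n p_kS_k(f;x)$. Then \[ \|R_n(f)-f\|=\begin{cases}\mathcal{O}\left(\left(\frac{p_n}{P_n}\right)^{\alpha}\right), & 0<\alpha<1,\\[4pt] \mathcal{O}\left(\frac{p_n}{P_n}\log\left(\frac{\pi P_n}{p_n}\right)\right), & \alpha=1.\end{cases} \]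
   Context: $S_k(f;x)$ is the $k$-th partial sum of the Fourier series of $f$ at $x$. $\|\cdot\|$ is the sup-norm. $\omega(\delta)=\sup_{|h|\le\delta}\sup_x|f(x+h)-f(x)|$. The notation $u=\mathcal{O}(v)$ means $u\le Cv$ for a positive constant $C$ (independent of $n$). *)

(* Defs.v *)
From Stdlib Require Import Reals Lra.
From Coquelicot Require Import Coquelicot.
Open Scope R_scope.

Definition fourier_a (f : R -> R) (j : nat) : R :=
  / PI * RInt (fun t => f t * cos (INR j * t)) (- PI) PI.
Definition fourier_b (f : R -> R) (j : nat) : R :=
  / PI * RInt (fun t => f t * sin (INR j * t)) (- PI) PI.

Fixpoint fourier_S (f : R -> R) (k : nat) (x : R) : R :=
  match k with
  | O => fourier_a f 0 / 2
  | S k' => fourier_S f k' x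
            + fourier_a f k * cos (INR k * x) + fourier_b f k * sin (INR k * x)
  end.

Fixpoint sum_lt (g : nat -> R) (m : nat) : R :=
  match m with
  | O => 0
  | S m' => sum_lt g m' + g m'
  end.

Definition Psum (p : nat -> R) (n : nat) : R := sum_lt p (S n).

Definition amat (p : nat -> R) (n k : nat) : R :=
  if Nat.leb k n then p k / Psum p n else 0.

Definition Rmean (p : nat -> R) (f : R -> R) (n : nat) (x : R) : R :=
  / Psum p n * sum_lt (fun k => p k * fourier_S f k x) (S n).

(* Main.v *)
Require Import Defs.
From Stdlib Require Import Reals Lra Lia.
From Coquelicot Require Import Coquelicot.
Open Scope R_scope.

Lemma cmul (f g : R -> R) x : continuous f x -> continuous g x -> continuous (fun y => f y * g y) x.
Proof. intros; now apply (continuous_mult f g). Qed.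
Lemma cplus (f g : R -> R) x : continuous f x -> continuous g x -> continuous (fun y => f y + g y) x.
Proof. intros; now apply (continuous_plus f g). Qed.
Lemma cminus (f g : R -> R) x : continuous f x -> continuous g x -> continuous (fun y => f y - g y) x.
Proof. intros; now apply (continuous_minus f g). Qed.
Lemma ccos a x : continuous (fun u => cos (a * u)) x.
Proof. apply (@ex_derive_continuous R_AbsRing R_NormedModule); auto_derive; auto. Qed.
Lemma csin a x : continuous (fun u => sin (a * u)) x.
Proof. apply (@ex_derive_continuous R_AbsRing R_NormedModule); auto_derive; auto. Qed.

Lemma sum_lt_le (g h : nat -> R) m : (forall k, (k < m)%nat -> g k <= h k) -> sum_lt g m <= sum_lt h m.
Proof. induction m; simpl; intros H. lra. assert (g m <= h m) by (apply H; lia).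
  assert (sum_lt g m <= sum_lt h m) by (apply IHm; intros; apply H; lia). lra. Qed.
Lemma sum_lt_ext (g h : nat -> R) m : (forall k, (k < m)%nat -> g k = h k) -> sum_lt g m = sum_lt h m.
Proof. induction m; simpl; intros H. lra. rewrite H by lia. rewrite IHm; auto. Qed.
Lemma sum_lt_abs (g : nat -> R) m : Rabs (sum_lt g m) <= sum_lt (fun k => Rabs (g k)) m.
Proof. induction m; simpl. rewrite Rabs_R0; lra.
  eapply Rle_trans. apply Rabs_triang. lra. Qed.
Lemma sum_lt_nonneg (g : nat -> R) m : (forall k, 0 <= g k) -> 0 <= sum_lt g m.
Proof. intros H; induction m; simpl. lra. specialize (H m); lra. Qed.
Lemma sum_lt_scal (g : nat -> R) c m : sum_lt (fun k => c * g k) m = c * sum_lt g m.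
Proof. induction m; simpl. ring. rewrite IHm; ring. Qed.
Lemma sum_lt_plus (g h : nat -> R) m : sum_lt (fun k => g k + h k) m = sum_lt g m + sum_lt h m.
Proof. induction m; simpl. ring. rewrite IHm; ring. Qed.
Lemma sum_lt_tele (w : nat -> R) m : sum_lt (fun k => w (S k) - w k) m = w m - w O.
Proof. induction m; simpl. ring. rewrite IHm; ring. Qed.

Lemma abel (c s : nat -> R) m :
  sum_lt (fun k => c k * s k) (S m) =
  sum_lt (fun k => (c k - c (S k)) * sum_lt s (S k)) m + c m * sum_lt s (S m).
Proof. induction m. simpl. ring.
  change (sum_lt (fun k => c k * s k) (S (S m))) with (sum_lt (fun k => c k * s k) (S m) + c (S m) * s (S m)).
  rewrite IHm. change (sum_lt s (S (S m))) with (sum_lt s (S m) + s (S m)). simpl. ring. Qed.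

Lemma abel_bound (c s T : nat -> R) m :
  (forall k, (k <= m)%nat -> Rabs (sum_lt s (S k)) <= T k) ->
  Rabs (sum_lt (fun k => c k * s k) (S m)) <=
  sum_lt (fun k => Rabs (c k - c (S k)) * T k) m + Rabs (c m) * T m.
Proof. intros H. rewrite abel. eapply Rle_trans. apply Rabs_triang. apply Rplus_le_compat.
  - eapply Rle_trans. apply sum_lt_abs. apply sum_lt_le. intros k Hk. rewrite Rabs_mult.
    apply Rmult_le_compat_l. apply Rabs_pos. apply H; lia.
  - rewrite Rabs_mult. apply Rmult_le_compat_l. apply Rabs_pos. apply H; lia. Qed.

Lemma sin_lower y : 0 <= y <= 2 -> y / 3 <= sin y.
Proof. intros Hy. assert (HP : 3 < PI) by (pose proof PI2_3_2; lra).
  destruct (SIN y) as [H _]; try lra.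
  assert (E : sin_lb y = y - y^3/6 + y^5/120 - y^7/5040).
  { unfold sin_lb, sin_approx, sin_term. simpl. field. }
  rewrite E in H. assert (0 <= y*y <= 4) by nra. assert (0 <= y^5) by (apply pow_le; lra).
  assert (0 <= y^5/120 - y^7/5040). { replace (y^7) with (y^5 * (y*y)) by ring.
   assert (y^5 * (y*y) <= y^5 * 4) by (apply Rmult_le_compat_l; lra). lra. }
  assert (y^3/6 <= 2*y/3) by (simpl; nra). lra. Qed.

Lemma sin_half_lower u : 0 <= u <= PI -> u / 6 <= sin (u / 2).
Proof. intros Hu. assert (PI <= 4) by apply PI_4. pose proof (sin_lower (u/2)). lra. Qed.

Fixpoint Dk (k : nat) (u : R) : R :=
  match k with O => / 2 | S k' => Dk k' u + cos (INR k * u) end.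
Definition Kern (p : nat -> R) (n : nat) (u : R) : R :=
  / Psum p n * sum_lt (fun k => p k * Dk k u) (S n).
Definition sk (u : R) (k : nat) : R := sin ((INR k + / 2) * u).

Lemma Dk_sin k u : 2 * sin (u / 2) * Dk k u = sk u k.
Proof. unfold sk. induction k.
  - simpl. replace ((0 + /2) * u) with (u/2) by field. field.
  - change (Dk (S k) u) with (Dk k u + cos (INR (S k) * u)).
    rewrite Rmult_plus_distr_l, IHk.
    replace ((INR (S k) + /2) * u) with (INR (S k) * u + u/2) by (rewrite S_INR; field).
    replace ((INR k + /2) * u) with (INR (S k) * u - u/2) by (rewrite S_INR; field).
    rewrite sin_plus, sin_minus. ring. Qed.

Lemma Tsum m u : 2 * sin (u / 2) * sum_lt (sk u) m = 1 - cos (INR m * u).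
Proof. induction m.
  - simpl. rewrite Rmult_0_l, cos_0. ring.
  - change (sum_lt (sk u) (S m)) with (sum_lt (sk u) m + sk u m).
    rewrite Rmult_plus_distr_l, IHm. unfold sk.
    replace (INR m * u) with ((INR m + /2) * u - u/2) by field.
    replace (INR (S m) * u) with ((INR m + /2) * u + u/2) by (rewrite S_INR; field).
    rewrite cos_plus, cos_minus. ring. Qed.

Lemma Tbound m u : 0 < sin (u / 2) -> Rabs (sum_lt (sk u) m) <= / sin (u / 2).
Proof. intros Hs. assert (E : sum_lt (sk u) m = (1 - cos (INR m * u)) / (2 * sin (u/2))).
  { rewrite <- Tsum. field. lra. }
  rewrite E. pose proof (COS_bound (INR m * u)). set (s := sin (u/2)) in *.
  assert (Rabs (1 - cos (INR m * u)) <= 2) by (apply Rabs_le; lra).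
  unfold Rdiv. rewrite Rabs_mult, Rabs_inv, (Rabs_right (2 * s)) by lra.
  replace (/ s) with (2 * / (2 * s)) by (field; lra).
  apply Rmult_le_compat_r. left; apply Rinv_0_lt_compat; lra. lra. Qed.

Definition wt (beta : R) (k : nat) : R := Rpower (INR (S k)) beta.

Lemma wt_pos beta k : 0 < wt beta k.
Proof. unfold wt, Rpower. apply exp_pos. Qed.
Lemma wt_mono beta k : 0 <= beta -> wt beta k <= wt beta (S k).
Proof. intros Hb. unfold wt. apply Rle_Rpower_l; auto. split.
  apply lt_0_INR; lia. apply le_INR; lia. Qed.
Lemma wt_ge1 beta k : 0 <= beta -> 1 <= wt beta k.
Proof. intros Hb. unfold wt. replace 1 with (Rpower 1 beta).
  apply Rle_Rpower_l; auto. split. lra. replace 1 with (INR 1) by reflexivity. apply le_INR; lia.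
  unfold Rpower. rewrite ln_1, Rmult_0_r, exp_0. reflexivity. Qed.

Lemma Ebound beta u m : 0 <= beta -> 0 < sin (u / 2) ->
  Rabs (sum_lt (fun k => wt beta k * sk u k) (S m)) <= 2 * wt beta m / sin (u / 2).
Proof. intros Hb Hs. eapply Rle_trans.
  apply (abel_bound (wt beta) (sk u) (fun _ => / sin (u / 2))). intros; apply Tbound; auto.
  rewrite (sum_lt_ext _ (fun k => / sin (u/2) * (wt beta (S k) - wt beta k))).
  2:{ intros k _. rewrite Rabs_left1. ring. pose proof (wt_mono beta k Hb). lra. }
  rewrite sum_lt_scal, sum_lt_tele. rewrite Rabs_right by (left; apply wt_pos).
  pose proof (wt_pos beta O). pose proof (Rinv_0_lt_compat _ Hs).
  unfold Rdiv. nra. Qed.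

Lemma Abound beta u (c : nat -> R) n : 0 <= beta -> 0 < sin (u / 2) ->
  Rabs (sum_lt (fun k => c k * sk u k) (S n)) <=
  2 / sin (u / 2) * (sum_lt (fun k => wt beta k * Rabs (c k / wt beta k - c (S k) / wt beta (S k))) n + Rabs (c n)).
Proof. intros Hb Hs.
  rewrite (sum_lt_ext _ (fun k => (c k / wt beta k) * (wt beta k * sk u k))).
  2:{ intros k _. field. pose proof (wt_pos beta k); lra. }
  eapply Rle_trans.
  apply (abel_bound (fun k => c k / wt beta k) (fun k => wt beta k * sk u k) (fun k => 2 * wt beta k / sin (u / 2))).
  intros; apply Ebound; auto.
  rewrite (sum_lt_ext _ (fun k => 2 / sin (u/2) * (wt beta k * Rabs (c k / wt beta k - c (S k) / wt beta (S k))))).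
  2:{ intros k _. field. lra. }
  rewrite sum_lt_scal. pose proof (wt_pos beta n).
  assert (E : Rabs (c n / wt beta n) = Rabs (c n) / wt beta n).
  { unfold Rdiv. rewrite Rabs_mult, Rabs_inv, (Rabs_right (wt beta n)) by lra. reflexivity. }
  rewrite E. right. field. split; lra. Qed.

Lemma Kern_sin p n u : Psum p n <> 0 ->
  2 * sin (u / 2) * Kern p n u = sum_lt (fun k => amat p n k * sk u k) (S n).
Proof. intros HP. unfold Kern. rewrite <- sum_lt_scal, <- sum_lt_scal.
  apply sum_lt_ext. intros k Hk. unfold amat. replace (Nat.leb k n) with true.
  2:{ symmetry; apply Nat.leb_le; lia. }
  rewrite <- Dk_sin. field. auto. Qed.

Lemma Dk_bound k u : 0 < u <= PI -> Rabs (Dk k u) <= 3 / u.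
Proof. intros Hu. pose proof (sin_half_lower u ltac:(lra)) as Hs.
  set (s := sin (u/2)) in *. assert (0 < s) by lra.
  assert (E : Dk k u = sk u k / (2 * s)) by (rewrite <- Dk_sin; fold s; field; lra).
  rewrite E. unfold Rdiv. rewrite Rabs_mult, Rabs_inv, (Rabs_right (2*s)) by lra.
  assert (Rabs (sk u k) <= 1) by (unfold sk; apply Rabs_le; apply SIN_bound).
  apply Rle_trans with (1 * / (2 * s)).
  apply Rmult_le_compat_r. left; apply Rinv_0_lt_compat; lra. lra.
  rewrite Rmult_1_l. replace (3 * / u) with (/ (2 * (u / 6))) by (field; lra).
  apply Rinv_le_contravar; lra. Qed.

Lemma Psum_pos p n : (forall k, 0 <= p k) -> Psum p n <> 0 -> 0 < Psum p n.
Proof. intros Hp HP. assert (0 <= Psum p n) by (apply sum_lt_nonneg; auto). lra. Qed.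

Lemma KB1 p n u : (forall k, 0 <= p k) -> Psum p n <> 0 -> 0 < u <= PI ->
  Rabs (Kern p n u) <= 3 / u.
Proof. intros Hp HP Hu. pose proof (Psum_pos p n Hp HP).
  unfold Kern. rewrite Rabs_mult, Rabs_inv, (Rabs_right (Psum p n)) by lra.
  apply Rle_trans with (/ Psum p n * sum_lt (fun k => 3 / u * p k) (S n)).
  - apply Rmult_le_compat_l. left; apply Rinv_0_lt_compat; lra.
    eapply Rle_trans. apply sum_lt_abs. apply sum_lt_le. intros k _.
    rewrite Rabs_mult, (Rabs_right (p k)) by (apply Rle_ge, Hp).
    rewrite Rmult_comm. apply Rmult_le_compat_r. apply Hp. apply Dk_bound; auto.
  - rewrite sum_lt_scal. fold (Psum p n). right. field. lra. Qed.

Lemma KB2 p n u beta Kc : (forall k, 0 <= p k) -> Psum p n <> 0 -> 0 < u <= PI -> 0 <= beta ->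
  0 <= Kc ->
  sum_lt (fun k => wt beta k * Rabs (amat p n k / wt beta k - amat p n (S k) / wt beta (S k))) n
     <= Kc * amat p n n ->
  Rabs (Kern p n u) <= 36 * (Kc + 1) * amat p n n / (u * u).
Proof. intros Hp HP Hu Hb HK Hc. pose proof (Psum_pos p n Hp HP).
  pose proof (sin_half_lower u ltac:(lra)) as Hs.
  assert (Ha : 0 <= amat p n n).
  { unfold amat. rewrite (proj2 (Nat.leb_le n n)) by lia. unfold Rdiv.
    apply Rmult_le_pos; auto. left; apply Rinv_0_lt_compat; lra. }
  pose proof (Kern_sin p n u HP) as E.
  pose proof (Abound beta u (amat p n) n Hb ltac:(lra)) as A.
  rewrite <- E in A. set (s := sin (u/2)) in *. set (a := amat p n n) in *.
  set (S0 := sum_lt _ n) in *. assert (0 < s) by lra.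
  rewrite Rabs_mult, (Rabs_right (2 * s)) in A by lra.
  rewrite (Rabs_right a) in A by lra.
  assert (A2 : 2 * s * Rabs (Kern p n u) <= 2 / s * ((Kc + 1) * a)).
  { eapply Rle_trans. exact A. apply Rmult_le_compat_l.
    left; unfold Rdiv; apply Rmult_lt_0_compat; [lra| apply Rinv_0_lt_compat; lra]. lra. }
  assert (A3 : Rabs (Kern p n u) <= (Kc + 1) * a * / (s * s)).
  { apply Rmult_le_reg_l with (2 * s). lra.
    replace (2 * s * ((Kc + 1) * a * / (s * s))) with (2 / s * ((Kc + 1) * a)) by (field; lra). exact A2. }
  eapply Rle_trans. exact A3.
  replace (36 * (Kc + 1) * a / (u * u)) with ((Kc + 1) * a * / (u * u / 36)) by (field; lra).
  apply Rmult_le_compat_l. apply Rmult_le_pos; lra.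
  apply Rinv_le_contravar. nra. nra. Qed.

Lemma Rpower_pos x y : 0 < Rpower x y.
Proof. unfold Rpower; apply exp_pos. Qed.

Lemma pos_between a b x : 0 < a -> 0 < b -> Rmin a b <= x <= Rmax a b -> 0 < x.
Proof. intros Ha Hb Hx. assert (0 < Rmin a b) by (apply Rmin_glb_lt; auto). lra. Qed.

Lemma is_derive_pow x g : 0 < x -> is_derive (fun u => Rpower u g) x (g * Rpower x (g - 1)).
Proof. intros Hx. apply is_derive_Reals. apply derivable_pt_lim_power; auto. Qed.

Lemma cont_pow x g : 0 < x -> continuous (fun u => Rpower u g) x.
Proof. intros Hx. apply (@ex_derive_continuous R_AbsRing R_NormedModule).
  eexists. apply is_derive_pow; auto. Qed.

Lemma is_RInt_pow a b g : 0 < a -> 0 < b -> g <> 0 ->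
  is_RInt (fun u => Rpower u (g - 1)) a b ((Rpower b g - Rpower a g) / g).
Proof. intros Ha Hb Hg.
  assert (H := is_RInt_derive (fun u => / g * Rpower u g) (fun u => Rpower u (g - 1)) a b).
  replace ((Rpower b g - Rpower a g) / g) with (minus (/ g * Rpower b g) (/ g * Rpower a g)).
  2:{ unfold minus, plus, opp; simpl. field; auto. }
  apply H.
  - intros x Hx. pose proof (pos_between a b x Ha Hb Hx).
    replace (Rpower x (g - 1)) with (/ g * (g * Rpower x (g - 1))) by (field; auto).
    apply is_derive_scal. apply is_derive_pow; auto.
  - intros x Hx. apply cont_pow. apply (pos_between a b x Ha Hb Hx). Qed.

Lemma is_RInt_inv a b : 0 < a -> 0 < b -> is_RInt (fun u => / u) a b (ln b - ln a).
Proof. intros Ha Hb.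
  assert (H := is_RInt_derive ln (fun u => / u) a b).
  apply H.
  - intros x Hx. pose proof (pos_between a b x Ha Hb Hx).
    apply is_derive_Reals. apply derivable_pt_lim_ln; auto.
  - intros x Hx. pose proof (pos_between a b x Ha Hb Hx).
    apply (@ex_derive_continuous R_AbsRing R_NormedModule). auto_derive. lra. Qed.

Lemma ex_RInt_cont (h : R -> R) a b : (forall x, continuous h x) -> ex_RInt h a b.
Proof. intros H. apply (@ex_RInt_continuous R_CompleteNormedModule). intros; apply H. Qed.

Lemma Rint1 (h : R -> R) c1 al de : (forall x, continuous h x) -> 0 < al -> 0 < de -> 0 <= c1 ->
  (forall u, 0 < u < de -> Rabs (h u) <= c1 * Rpower u (al - 1)) ->
  RInt (fun u => Rabs (h u)) 0 de <= c1 / al * Rpower de al.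
Proof. intros Hc Hal Hde Hc1 Hb.
  set (ha := fun u => Rabs (h u)).
  assert (Hca : forall x, continuous ha x) by (intros; apply continuous_Rabs_comp, Hc).
  destruct (continuity_ab_maj ha 0 de) as [Mx [HM _]]. lra.
  { intros c _. apply continuity_pt_filterlim. apply Hca. }
  set (B := ha Mx) in *. assert (HB : 0 <= B) by (unfold B, ha; apply Rabs_pos).
  apply Rnot_lt_le. intro Hlt. set (X := RInt ha 0 de) in *. set (A := c1 / al * Rpower de al) in *.
  set (e := Rmin (de / 2) ((X - A) / (2 * (B + 1)))).
  assert (He1 : 0 < e). { apply Rmin_glb_lt. lra. apply Rdiv_lt_0_compat; lra. }
  assert (He2 : e <= de / 2) by apply Rmin_l.
  assert (He3 : e <= (X - A) / (2 * (B + 1))) by apply Rmin_r.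
  assert (EX : X = RInt ha 0 e + RInt ha e de).
  { unfold X. rewrite <- (RInt_Chasles ha 0 e de) by (apply ex_RInt_cont; auto). reflexivity. }
  assert (I1 : RInt ha 0 e <= e * B).
  { apply Rle_trans with (RInt (fun _ => B) 0 e).
    apply RInt_le. lra. apply ex_RInt_cont; auto. apply ex_RInt_const.
    intros x Hx. apply HM. lra.
    rewrite RInt_const. unfold scal; simpl; unfold mult; simpl. lra. }
  assert (HI := is_RInt_scal _ _ _ c1 _ (is_RInt_pow e de al He1 Hde ltac:(lra))).
  assert (I2 : RInt ha e de <= c1 * ((Rpower de al - Rpower e al) / al)).
  { apply Rle_trans with (RInt (fun y => scal c1 (Rpower y (al - 1))) e de).
    apply RInt_le. lra. apply ex_RInt_cont; auto. eexists; exact HI.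
    intros x Hx. apply Hb. lra.
    right. apply is_RInt_unique. exact HI. }
  pose proof (Rpower_pos e al).
  assert (c1 * ((Rpower de al - Rpower e al) / al) <= A).
  { unfold A. unfold Rdiv. rewrite Rmult_minus_distr_r, Rmult_minus_distr_l.
    assert (0 <= c1 * (Rpower e al * / al)). apply Rmult_le_pos; auto.
    apply Rmult_le_pos; [lra| left; apply Rinv_0_lt_compat; lra]. lra. }
  assert (e * B <= (X - A) / (2 * (B + 1)) * B) by (apply Rmult_le_compat_r; lra).
  assert ((X - A) / (2 * (B + 1)) * B <= (X - A) / 2).
  { unfold Rdiv. replace ((X - A) * / 2) with ((X - A) * / (2 * (B + 1)) * (B + 1)) by (field; lra).
    apply Rmult_le_compat_l. apply Rmult_le_pos. lra. left; apply Rinv_0_lt_compat; lra. lra. }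
  lra. Qed.

Lemma R2a (h : R -> R) c2 al de : (forall x, continuous h x) -> al < 1 -> 0 < de <= PI -> 0 <= c2 ->
  (forall u, de < u < PI -> Rabs (h u) <= c2 * Rpower u (al - 2)) ->
  RInt (fun u => Rabs (h u)) de PI <= c2 / (1 - al) * Rpower de (al - 1).
Proof. intros Hc Hal Hde Hc2 Hb.
  assert (HPI : 0 < PI) by apply PI_RGT_0.
  assert (HI0 := is_RInt_pow de PI (al - 1) ltac:(lra) HPI ltac:(lra)).
  assert (HI1 : is_RInt (fun u => Rpower u (al - 2)) de PI ((Rpower PI (al - 1) - Rpower de (al - 1)) / (al - 1))).
  { eapply is_RInt_ext; [|exact HI0]. intros x _. simpl. replace (al - 2) with (al - 1 - 1) by ring. reflexivity. }
  assert (HI := is_RInt_scal _ _ _ c2 _ HI1).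
  apply Rle_trans with (RInt (fun y => scal c2 (Rpower y (al - 2))) de PI).
  apply RInt_le. lra. apply ex_RInt_cont. intros; apply continuous_Rabs_comp, Hc. eexists; exact HI.
  intros x Hx. apply Hb. lra.
  replace (RInt (fun y : R => scal c2 (Rpower y (al - 2))) de PI) with (scal c2 ((Rpower PI (al - 1) - Rpower de (al - 1)) / (al - 1))) by (symmetry; apply is_RInt_unique; exact HI). unfold scal; simpl; unfold mult; simpl.
  pose proof (Rpower_pos PI (al - 1)).
  replace (c2 * ((Rpower PI (al - 1) - Rpower de (al - 1)) / (al - 1))) with
    (c2 / (1 - al) * (Rpower de (al - 1) - Rpower PI (al - 1))) by (field; lra).
  apply Rmult_le_compat_l. apply Rmult_le_pos. lra. left; apply Rinv_0_lt_compat; lra. lra. Qed.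

Lemma R2b (h : R -> R) c2 de : (forall x, continuous h x) -> 0 < de <= PI -> 0 <= c2 ->
  (forall u, de < u < PI -> Rabs (h u) <= c2 * / u) ->
  RInt (fun u => Rabs (h u)) de PI <= c2 * (ln PI - ln de).
Proof. intros Hc Hde Hc2 Hb.
  assert (HPI : 0 < PI) by apply PI_RGT_0.
  assert (HI := is_RInt_scal _ _ _ c2 _ (is_RInt_inv de PI ltac:(lra) HPI)).
  apply Rle_trans with (RInt (fun y => scal c2 (/ y)) de PI).
  apply RInt_le. lra. apply ex_RInt_cont. intros; apply continuous_Rabs_comp, Hc. eexists; exact HI.
  intros x Hx. apply Hb. lra.
  replace (RInt (fun y : R => scal c2 (/ y)) de PI) with (scal c2 (ln PI - ln de)) by (symmetry; apply is_RInt_unique; exact HI). right. reflexivity. Qed.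

Lemma rp1 u al : 0 < u -> Rpower u al * / u = Rpower u (al - 1).
Proof. intros Hu. replace (al - 1) with (al + - (1)) by ring. rewrite Rpower_plus, Rpower_Ropp, Rpower_1; auto. Qed.
Lemma rp2 u al : 0 < u -> Rpower u al * / (u * u) = Rpower u (al - 2).
Proof. intros Hu. replace (al - 2) with (al - 1 - 1) by ring. rewrite <- !rp1; auto.
  field; lra. Qed.
Lemma rp3 de al : 0 < de -> de * Rpower de (al - 1) = Rpower de al.
Proof. intros Hd. rewrite <- rp1 by auto. field. lra. Qed.

Lemma ln_ge1 de : 0 < de <= 1 -> 1 <= ln (PI / de).
Proof. intros Hd. assert (HP : 3 < PI) by (pose proof PI2_3_2; lra).
  pose proof exp_le_3. rewrite <- ln_exp at 1. apply ln_le. apply exp_pos.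
  assert (PI <= PI / de).
  { unfold Rdiv. rewrite <- (Rmult_1_r PI) at 1. apply Rmult_le_compat_l. lra.
    rewrite <- Rinv_1. apply Rinv_le_contravar; lra. }
  lra. Qed.

Lemma side (g Kf : R -> R) M A B al de :
  (forall x, continuous g x) -> (forall x, continuous Kf x) ->
  0 <= M -> 0 <= A -> 0 <= B -> 0 < al <= 1 -> 0 < de <= 1 ->
  (forall u, 0 < u -> Rabs (g u) <= M * Rpower u al) ->
  (forall u, 0 < u <= PI -> Rabs (Kf u) <= A / u) ->
  (forall u, 0 < u <= PI -> Rabs (Kf u) <= B * de / (u * u)) ->
  (al < 1 -> RInt (fun u => Rabs (g u * Kf u)) 0 PI <= (M * A / al + M * B / (1 - al)) * Rpower de al) /\
  (al = 1 -> RInt (fun u => Rabs (g u * Kf u)) 0 PI <= (M * A + M * B) * (de * ln (PI / de))).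
Proof. intros Hg HK HM HA HB Hal Hde Hgb HK1 HK2.
  assert (HP : 3 < PI) by (pose proof PI2_3_2; lra).
  set (h := fun u => g u * Kf u).
  assert (Hh : forall x, continuous h x) by (intros; apply cmul; auto).
  assert (Hah : forall x, continuous (fun u => Rabs (h u)) x) by (intros; apply continuous_Rabs_comp, Hh).
  assert (EC : RInt (fun u => Rabs (h u)) 0 PI = RInt (fun u => Rabs (h u)) 0 de + RInt (fun u => Rabs (h u)) de PI).
  { rewrite <- (RInt_Chasles (fun u => Rabs (h u)) 0 de PI) by (apply ex_RInt_cont; auto). reflexivity. }
  assert (P1 : forall u, 0 < u <= PI -> Rabs (h u) <= M * A * Rpower u (al - 1)).
  { intros u Hu. unfold h. rewrite Rabs_mult. rewrite <- rp1 by lra.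
    eapply Rle_trans. apply Rmult_le_compat. apply Rabs_pos. apply Rabs_pos. apply Hgb; lra. apply HK1; auto.
    right. unfold Rdiv. ring. }
  assert (P2 : forall u, 0 < u <= PI -> Rabs (h u) <= M * B * de * Rpower u (al - 2)).
  { intros u Hu. unfold h. rewrite Rabs_mult. rewrite <- rp2 by lra.
    eapply Rle_trans. apply Rmult_le_compat. apply Rabs_pos. apply Rabs_pos. apply Hgb; lra. apply HK2; auto.
    right. unfold Rdiv. ring. }
  assert (I1 : RInt (fun u => Rabs (h u)) 0 de <= M * A / al * Rpower de al).
  { apply (Rint1 h); [auto|lra|lra|apply Rmult_le_pos; auto|intros u Hu; apply P1; lra]. }
  assert (EC' : RInt (fun u => Rabs (g u * Kf u)) 0 PI = RInt (fun u => Rabs (h u)) 0 de + RInt (fun u => Rabs (h u)) de PI) by exact EC.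
  split; intros Hal2.
  - assert (I2 : RInt (fun u => Rabs (h u)) de PI <= M * B * de / (1 - al) * Rpower de (al - 1)).
    { apply (R2a h); [auto|lra|lra|apply Rmult_le_pos; [apply Rmult_le_pos|]; lra|intros u Hu; apply P2; lra]. }
    rewrite EC'. replace (M * B * de / (1 - al) * Rpower de (al - 1)) with
      (M * B / (1 - al) * (de * Rpower de (al - 1))) in I2 by (field; lra).
    rewrite rp3 in I2 by lra. lra.
  - subst al. 
    assert (I2 : RInt (fun u => Rabs (h u)) de PI <= M * B * de * (ln PI - ln de)).
    { apply (R2b h); [auto|lra|apply Rmult_le_pos; [apply Rmult_le_pos|]; lra|]. intros u Hu.
      eapply Rle_trans. apply P2. lra. right. rewrite <- rp2 by lra. rewrite Rpower_1 by lra. field. lra. }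
    rewrite Rpower_1 in I1 by lra.
    rewrite EC'. rewrite ln_div in * by lra. pose proof (ln_ge1 de Hde). rewrite ln_div in H by lra.
    assert (M * A / 1 * de <= M * A * (de * (ln PI - ln de))).
    { replace (M * A / 1 * de) with (M * A * de * 1) by field. 
      replace (M * A * (de * (ln PI - ln de))) with (M * A * de * (ln PI - ln de)) by ring.
      apply Rmult_le_compat_l. apply Rmult_le_pos; [apply Rmult_le_pos|]; lra. lra. }
    lra. Qed.

Lemma chasles (g : R -> R) a b c : (forall x, continuous g x) ->
  RInt g a b + RInt g b c = RInt g a c.
Proof. intros Hg. apply (RInt_Chasles g); apply ex_RInt_cont; auto. Qed.

Lemma comp_shift (g : R -> R) v a b : (forall x, continuous g x) ->
  RInt (fun y => g (y + v)) a b = RInt g (a + v) (b + v).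
Proof. intros Hg. assert (H := RInt_comp_lin g 1 v a b (ex_RInt_cont g _ _ Hg)).
  replace (1 * a + v) with (a + v) in H by ring. replace (1 * b + v) with (b + v) in H by ring.
  rewrite <- H. apply RInt_ext. intros y _. unfold scal; simpl; unfold mult; simpl.
  replace (1 * y + v) with (y + v) by ring. ring. Qed.

Lemma comp_neg (g : R -> R) a b : (forall x, continuous g x) ->
  RInt (fun y => g (- y)) a b = RInt g (- b) (- a).
Proof. intros Hg. assert (H := RInt_comp_lin g (-1) 0 a b (ex_RInt_cont g _ _ Hg)).
  replace (-1 * a + 0) with (- a) in H by ring. replace (-1 * b + 0) with (- b) in H by ring.
  rewrite <- (opp_RInt_swap g) by (apply ex_RInt_cont; auto). rewrite <- H.
  assert (Hc : forall y, continuous (fun y => scal (-1) (g (-1 * y + 0))) y).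
  { intros y. apply (continuous_scal (fun _ => -1) (fun y => g (-1 * y + 0))).
    apply continuous_const. apply continuous_comp. apply (@ex_derive_continuous R_AbsRing R_NormedModule).
    auto_derive; auto. apply Hg. }
  rewrite <- (RInt_opp) by (apply ex_RInt_cont; auto).
  apply RInt_ext. intros y _. unfold scal, opp; simpl; unfold mult; simpl.
  replace (-1 * y + 0) with (- y) by ring. ring. Qed.

Lemma RInt_scal_R (F : R -> R) l a b : (forall x, continuous F x) ->
  RInt (fun t => l * F t) a b = l * RInt F a b.
Proof. intros H. apply (RInt_scal F). apply ex_RInt_cont; auto. Qed.
Lemma RInt_plus_R (F G : R -> R) a b : (forall x, continuous F x) -> (forall x, continuous G x) ->
  RInt (fun t => F t + G t) a b = RInt F a b + RInt G a b.
Proof. intros H1 H2. apply (RInt_plus F G); apply ex_RInt_cont; auto. Qed.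
Lemma RInt_minus_R (F G : R -> R) a b : (forall x, continuous F x) -> (forall x, continuous G x) ->
  RInt (fun t => F t - G t) a b = RInt F a b - RInt G a b.
Proof. intros H1 H2. apply (RInt_minus F G); apply ex_RInt_cont; auto. Qed.

Lemma csum (F : nat -> R -> R) m x : (forall k x, continuous (F k) x) ->
  continuous (fun u => sum_lt (fun k => F k u) m) x.
Proof. intros H. induction m; simpl. apply continuous_const. apply cplus; auto. Qed.

Lemma RInt_sum (F : nat -> R -> R) m a b : (forall k x, continuous (F k) x) ->
  RInt (fun u => sum_lt (fun k => F k u) m) a b = sum_lt (fun k => RInt (F k) a b) m.
Proof. intros H. induction m; simpl.
  - rewrite RInt_const. unfold scal; simpl; unfold mult; simpl. ring.
  - rewrite RInt_plus_R. rewrite IHm. reflexivity. intros; apply csum; auto. apply H. Qed.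

Lemma shift (g : R -> R) x : (forall y, continuous g y) -> (forall t, g (t + 2 * PI) = g t) ->
  RInt g (- PI) PI = RInt (fun u => g (x + u)) (- PI) PI.
Proof. intros Hg Hp.
  rewrite (RInt_ext (fun u => g (x + u)) (fun u => g (u + x))) by (intros; f_equal; ring).
  rewrite comp_shift by auto.
  set (a := - PI + x). replace (PI + x) with (a + 2 * PI) by (unfold a; ring).
  rewrite <- (chasles g a PI (a + 2 * PI)) by auto.
  replace (a + 2 * PI) with (a + 2 * PI) by ring.
  assert (E : RInt g PI (a + 2 * PI) = RInt g (- PI) a).
  { replace PI with (- PI + 2 * PI) at 1 by ring. rewrite <- comp_shift by auto.
    apply RInt_ext. intros; apply Hp. }
  rewrite E. rewrite Rplus_comm. apply eq_sym, chasles; auto. Qed.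

Lemma RInt_ext_R (F G : R -> R) a b : (forall x, F x = G x) -> RInt F a b = RInt G a b.
Proof. intros H. apply RInt_ext. intros; apply H. Qed.

Ltac fixeq := match goal with |- @eq _ ?a ?b => change (@eq R a b) end.

Lemma ccos2 a b x : continuous (fun u => cos (a * (u - b))) x.
Proof. apply (@ex_derive_continuous R_AbsRing R_NormedModule); auto_derive; auto. Qed.

Lemma cDk k x : continuous (Dk k) x.
Proof. induction k; simpl. apply continuous_const. apply cplus; auto. apply ccos. Qed.

Lemma cshift (f : R -> R) x y : (forall t, continuous f t) -> continuous (fun u => f (x + u)) y.
Proof. intros Hc. apply continuous_comp. apply (@ex_derive_continuous R_AbsRing R_NormedModule); auto_derive; auto. apply Hc. Qed.

Section F.
Variable f : R -> R.
Hypothesis Hc : forall t, continuous f t.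
Hypothesis Hper : forall t, f (t + 2 * PI) = f t.

Lemma fterm j x : fourier_a f j * cos (INR j * x) + fourier_b f j * sin (INR j * x) =
  / PI * RInt (fun u => f (x + u) * cos (INR j * u)) (- PI) PI.
Proof. unfold fourier_a, fourier_b.
  replace (/ PI * RInt (fun t => f t * cos (INR j * t)) (- PI) PI * cos (INR j * x) +
     / PI * RInt (fun t => f t * sin (INR j * t)) (- PI) PI * sin (INR j * x)) with
    (/ PI * (cos (INR j * x) * RInt (fun t => f t * cos (INR j * t)) (- PI) PI +
       sin (INR j * x) * RInt (fun t => f t * sin (INR j * t)) (- PI) PI)) by ring.
  f_equal.
  rewrite <- !RInt_scal_R. rewrite <- RInt_plus_R.
  2-5: intros; repeat first [apply cmul | apply continuous_const | apply ccos | apply csin | apply Hc].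
  rewrite (RInt_ext_R _ (fun t => f t * cos (INR j * (t - x)))).
  2:{ intros t. replace (INR j * (t - x)) with (INR j * t - INR j * x) by ring. rewrite cos_minus. ring. }
  rewrite (shift _ x).
  2:{ intros; apply cmul; [apply Hc| apply ccos2]. }
  2:{ intros t. rewrite Hper. f_equal. replace (INR j * (t + 2 * PI - x)) with (INR j * (t - x) + 2 * INR j * PI) by ring.
      apply cos_period. }
  apply RInt_ext_R. intros u. f_equal. f_equal. ring. Qed.

Lemma fS k x : fourier_S f k x = / PI * RInt (fun u => f (x + u) * Dk k u) (- PI) PI.
Proof. induction k.
  - change (fourier_S f 0 x) with (fourier_a f 0 / 2). pose proof (fterm 0 x) as H. simpl in H. rewrite Rmult_0_l, cos_0, sin_0 in H.
    replace (fourier_a f 0 * 1 + fourier_b f 0 * 0) with (fourier_a f 0) in H by ring.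
    rewrite H. rewrite (RInt_ext_R (fun u => f (x + u) * Dk 0 u) (fun u => / 2 * (f (x + u) * cos (0 * u)))).
    2:{ intros u. simpl. rewrite Rmult_0_l, cos_0. ring. }
    rewrite RInt_scal_R. field. apply PI_neq0.
    intros; apply cmul. apply cshift; auto. apply ccos.
  - change (fourier_S f (S k) x) with (fourier_S f k x + fourier_a f (S k) * cos (INR (S k) * x) + fourier_b f (S k) * sin (INR (S k) * x)).
    rewrite Rplus_assoc, fterm, IHk. rewrite <- Rmult_plus_distr_l. f_equal.
    rewrite <- RInt_plus_R. apply RInt_ext_R. intros; simpl. ring.
    intros; apply cmul. apply cshift; auto. apply cDk.
    intros; apply cmul. apply cshift; auto. apply ccos. Qed.

End F.

Lemma RInt_const_R (c a b : R) : RInt (fun _ => c) a b = (b - a) * c.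
Proof. rewrite RInt_const. reflexivity. Qed.

Lemma sin_nPI j : sin (INR j * PI) = 0.
Proof. induction j. simpl. rewrite Rmult_0_l; apply sin_0.
  rewrite S_INR, Rmult_plus_distr_r, Rmult_1_l, neg_sin, IHj. (try fixeq); ring. Qed.

Lemma int_cos j : (1 <= j)%nat -> RInt (fun u => cos (INR j * u)) (- PI) PI = 0.
Proof. intros Hj. assert (HJ : 0 < INR j) by (apply lt_0_INR; lia).
  apply is_RInt_unique.
  replace 0 with (minus (sin (INR j * PI) / INR j) (sin (INR j * - PI) / INR j)).
  2:{ unfold minus, plus, opp; simpl. replace (INR j * - PI) with (- (INR j * PI)) by ring.
      rewrite sin_neg, sin_nPI. (try fixeq); field. lra. }
  apply (is_RInt_derive (fun u => sin (INR j * u) / INR j)).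
  - intros x _. auto_derive. auto. (try fixeq); field. lra.
  - intros x _. apply ccos. Qed.

Lemma int_Dk k : RInt (Dk k) (- PI) PI = PI.
Proof. induction k.
  - rewrite (RInt_ext_R (Dk 0) (fun _ => / 2)) by reflexivity. rewrite RInt_const_R. fixeq. (try fixeq); field.
  - rewrite (RInt_ext_R (Dk (S k)) (fun u => Dk k u + cos (INR (S k) * u))) by reflexivity.
    rewrite RInt_plus_R. rewrite IHk, int_cos by lia. fixeq; (try fixeq); ring.
    apply cDk. apply ccos. Qed.

Lemma cKern p n x : continuous (Kern p n) x.
Proof. unfold Kern. apply cmul. apply continuous_const.
  apply (csum (fun k u => p k * Dk k u)). intros; apply cmul. apply continuous_const. apply cDk. Qed.

Lemma int_Kern p n : Psum p n <> 0 -> RInt (Kern p n) (- PI) PI = PI.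
Proof. intros HP. unfold Kern. rewrite RInt_scal_R.
  rewrite (RInt_sum (fun k u => p k * Dk k u)).
  rewrite (sum_lt_ext _ (fun k => PI * p k)). rewrite sum_lt_scal. fold (Psum p n). (try fixeq); field. auto.
  intros k _. rewrite RInt_scal_R, int_Dk. (try fixeq); ring. apply cDk.
  intros; apply cmul. apply continuous_const. apply cDk.
  intros; apply (csum (fun k u => p k * Dk k u)). intros; apply cmul. apply continuous_const. apply cDk. Qed.

Lemma Dk_even k u : Dk k (- u) = Dk k u.
Proof. induction k; simpl. auto. rewrite IHk. f_equal.
  replace (match k with | 0%nat => 1 | S _ => INR k + 1 end * - u) with (- (match k with | 0%nat => 1 | S _ => INR k + 1 end * u)) by ring.
  apply cos_neg. Qed.

Lemma Kern_even p n u : Kern p n (- u) = Kern p n u.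
Proof. unfold Kern. f_equal. apply sum_lt_ext. intros; rewrite Dk_even; auto. Qed.

Section F.
Variable f : R -> R.
Hypothesis Hc : forall t, continuous f t.
Hypothesis Hper : forall t, f (t + 2 * PI) = f t.

Lemma Rmean_rep p n x : Psum p n <> 0 ->
  Rmean p f n x = / PI * RInt (fun u => f (x + u) * Kern p n u) (- PI) PI.
Proof. intros HP. unfold Rmean.
  rewrite (sum_lt_ext _ (fun k => / PI * RInt (fun u => p k * (f (x + u) * Dk k u)) (- PI) PI)).
  2:{ intros k _. rewrite fS by auto. rewrite RInt_scal_R. (try fixeq); ring. intros; apply cmul. apply cshift; auto. apply cDk. }
  rewrite sum_lt_scal. rewrite <- (RInt_sum (fun k u => p k * (f (x + u) * Dk k u))).
  2:{ intros; apply cmul. apply continuous_const. apply cmul. apply cshift; auto. apply cDk. }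
  unfold Kern. rewrite (RInt_ext_R (fun u => f (x + u) * (/ Psum p n * sum_lt (fun k => p k * Dk k u) (S n))) (fun u => / Psum p n * sum_lt (fun k => p k * (f (x + u) * Dk k u)) (S n))).
  2:{ intros u. rewrite (sum_lt_ext (fun k => p k * (f (x+u) * Dk k u)) (fun k => f (x+u) * (p k * Dk k u))) by (intros; ring).
      rewrite sum_lt_scal. ring. }
  rewrite RInt_scal_R. (try fixeq); ring.
  intros; apply (csum (fun k u => p k * (f (x + u) * Dk k u))). intros; apply cmul. apply continuous_const. apply cmul. apply cshift; auto. apply cDk. Qed.

Lemma diff_rep p n x : Psum p n <> 0 ->
  Rmean p f n x - f x = / PI * RInt (fun u => (f (x + u) - f x) * Kern p n u) (- PI) PI.
Proof. intros HP. rewrite Rmean_rep by auto.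
  rewrite (RInt_ext_R (fun u => (f (x + u) - f x) * Kern p n u) (fun u => f (x + u) * Kern p n u - f x * Kern p n u)) by (intros; ring).
  rewrite RInt_minus_R. 2: (intros; apply cmul; [apply cshift; auto| apply cKern]).
  2: (intros; apply cmul; [apply continuous_const| apply cKern]).
  rewrite RInt_scal_R by apply cKern. rewrite int_Kern by auto. fixeq; field. apply PI_neq0. Qed.
End F.

Lemma cshiftn (f : R -> R) x y : (forall t, continuous f t) -> continuous (fun u => f (x + - u)) y.
Proof. intros Hc. apply continuous_comp. apply (@ex_derive_continuous R_AbsRing R_NormedModule); auto_derive; auto. apply Hc. Qed.

Lemma amat_nn p n : amat p n n = p n / Psum p n.
Proof. unfold amat. rewrite (proj2 (Nat.leb_le n n)) by lia. reflexivity. Qed.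

Lemma chain (b : nat -> R) m : forall k, (k <= m)%nat ->
  b k <= b m + sum_lt (fun j => Rabs (b j - b (S j))) m.
Proof. induction m; intros k Hk.
  - replace k with O by lia. simpl. lra.
  - destruct (Nat.eq_dec k (S m)) as [->|Hne].
    + assert (0 <= sum_lt (fun j => Rabs (b j - b (S j))) (S m)) by (apply sum_lt_nonneg; intros; apply Rabs_pos). lra.
    + assert (H := IHm k ltac:(lia)). simpl.
      pose proof (Rle_abs (b m - b (S m))). lra. Qed.

Lemma delta_pos p n beta Kc : (forall k, 0 <= p k) -> Psum p n <> 0 -> 0 <= beta ->
  sum_lt (fun k => wt beta k * Rabs (amat p n k / wt beta k - amat p n (S k) / wt beta (S k))) n
     <= Kc * amat p n n -> 0 < p n.
Proof. intros Hp HP Hb Hc. pose proof (Psum_pos p n Hp HP). destruct (Hp n) as [|E]; auto.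
  exfalso. assert (Ha : amat p n n = 0) by (rewrite amat_nn, <- E; unfold Rdiv; ring).
  rewrite Ha, Rmult_0_r in Hc.
  set (b := fun k => amat p n k / wt beta k).
  assert (Hs : sum_lt (fun j => Rabs (b j - b (S j))) n <= 0).
  { eapply Rle_trans; [|exact Hc]. apply sum_lt_le. intros k _. unfold b.
    pose proof (wt_ge1 beta k Hb). pose proof (Rabs_pos (amat p n k / wt beta k - amat p n (S k) / wt beta (S k))).
    rewrite <- (Rmult_1_l (Rabs _)) at 1. apply Rmult_le_compat_r; lra. }
  assert (Hz : forall k, (k < S n)%nat -> p k <= 0).
  { intros k Hk. pose proof (chain b n k ltac:(lia)) as Hch.
    assert (Hbn : b n = 0) by (unfold b; rewrite Ha; unfold Rdiv; ring).
    assert (b k <= 0) by lra. unfold b, amat in H0.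
    rewrite (proj2 (Nat.leb_le k n)) in H0 by lia.
    pose proof (wt_pos beta k).
    assert (p k / Psum p n <= 0).
    { apply Rmult_le_reg_r with (/ wt beta k). apply Rinv_0_lt_compat; lra. rewrite Rmult_0_l. exact H0. }
    apply Rmult_le_reg_r with (/ Psum p n). apply Rinv_0_lt_compat; lra. rewrite Rmult_0_l. exact H2. }
  assert (Psum p n <= 0).
  { unfold Psum. apply Rle_trans with (sum_lt (fun _ => 0) (S n)).
    apply sum_lt_le. auto. clear. induction (S n); simpl; lra. }
  lra. Qed.

Lemma core f p n x beta M Kc al :
  (forall t, continuous f t) -> (forall t, f (t + 2 * PI) = f t) ->
  (forall k, 0 <= p k) -> Psum p n <> 0 -> 0 <= beta -> 0 <= M -> 0 <= Kc -> 0 < al <= 1 ->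
  (forall u, 0 < u -> forall h, Rabs h <= u -> Rabs (f (x + h) - f x) <= M * Rpower u al) ->
  sum_lt (fun k => wt beta k * Rabs (amat p n k / wt beta k - amat p n (S k) / wt beta (S k))) n
     <= Kc * amat p n n ->
  (al < 1 -> Rabs (Rmean p f n x - f x) <=
     2 / PI * (M * 3 / al + M * (36 * (Kc + 1)) / (1 - al)) * Rpower (p n / Psum p n) al) /\
  (al = 1 -> Rabs (Rmean p f n x - f x) <=
     2 / PI * (M * 3 + M * (36 * (Kc + 1))) * (p n / Psum p n * ln (PI * Psum p n / p n))).
Proof. intros Hc Hper Hp HP Hb HM HK Hal Hlip Hcond.
  assert (HPI : 0 < PI) by apply PI_RGT_0.
  pose proof (Psum_pos p n Hp HP) as HPp.
  pose proof (delta_pos p n beta Kc Hp HP Hb Hcond) as Hpn.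
  set (de := amat p n n).
  assert (Hde : 0 < de <= 1).
  { unfold de; rewrite amat_nn. split. apply Rdiv_lt_0_compat; lra.
    assert (p n <= Psum p n).
    { unfold Psum. simpl. pose proof (sum_lt_nonneg p n Hp). lra. }
    apply Rmult_le_reg_r with (Psum p n). lra. unfold Rdiv. rewrite Rmult_assoc, Rinv_l by lra. lra. }
  set (H := fun u => (f (x + u) - f x) * Kern p n u).
  assert (HHc : forall u, continuous H u).
  { intros; apply cmul. apply cminus. apply cshift; auto. apply continuous_const. apply cKern. }
  assert (HaHc : forall u, continuous (fun u => Rabs (H u)) u) by (intros; apply continuous_Rabs_comp, HHc).
  assert (E1 : Rabs (Rmean p f n x - f x) <= / PI * (RInt (fun u => Rabs ((f (x + - u) - f x) * Kern p n u)) 0 PI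
                                           + RInt (fun u => Rabs ((f (x + u) - f x) * Kern p n u)) 0 PI)).
  { rewrite diff_rep by auto. rewrite Rabs_mult, Rabs_inv, (Rabs_right PI) by lra.
    apply Rmult_le_compat_l. left; apply Rinv_0_lt_compat; lra.
    eapply Rle_trans. apply abs_RInt_le. lra. apply (ex_RInt_cont H). auto.
    change (RInt (fun t => Rabs (H t)) (- PI) PI <= RInt (fun u => Rabs ((f (x + - u) - f x) * Kern p n u)) 0 PI
                                           + RInt (fun u => Rabs (H u)) 0 PI).
    rewrite <- (chasles (fun t => Rabs (H t)) (- PI) 0 PI) by auto.
    apply Rplus_le_compat_r. right.
    rewrite (RInt_ext_R (fun u => Rabs ((f (x + - u) - f x) * Kern p n u)) (fun u => Rabs (H (- u)))).
    2:{ intros u. unfold H. rewrite Kern_even. reflexivity. }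
    rewrite (comp_neg (fun t => Rabs (H t))) by auto. rewrite Ropp_0. reflexivity. }
  assert (HK1 : forall u, 0 < u <= PI -> Rabs (Kern p n u) <= 3 / u) by (intros; apply KB1; auto).
  assert (HK2 : forall u, 0 < u <= PI -> Rabs (Kern p n u) <= 36 * (Kc + 1) * de / (u * u))
    by (intros; apply KB2 with beta; auto).
  assert (S1 := side (fun u => f (x + - u) - f x) (Kern p n) M 3 (36 * (Kc + 1)) al de).
  assert (S2 := side (fun u => f (x + u) - f x) (Kern p n) M 3 (36 * (Kc + 1)) al de).
  destruct S1 as [S1a S1b]; auto.
  { intros; apply cminus. apply cshiftn; auto. apply continuous_const. }
  apply cKern. lra. lra.
  { intros u Hu. apply Hlip; auto. rewrite Rabs_Ropp, Rabs_right; lra. }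
  destruct S2 as [S2a S2b]; auto.
  { intros; apply cminus. apply cshift; auto. apply continuous_const. }
  apply cKern. lra. lra.
  { intros u Hu. apply Hlip; auto. rewrite Rabs_right; lra. }
  assert (Ed : de = p n / Psum p n) by apply amat_nn.
  split; intros Ha.
  - specialize (S1a Ha). specialize (S2a Ha). rewrite <- Ed.
    eapply Rle_trans. exact E1.
    replace (2 / PI * (M * 3 / al + M * (36 * (Kc + 1)) / (1 - al)) * Rpower de al) with
      (/ PI * ((M * 3 / al + M * (36 * (Kc + 1)) / (1 - al)) * Rpower de al + (M * 3 / al + M * (36 * (Kc + 1)) / (1 - al)) * Rpower de al)) by (field; lra).
    apply Rmult_le_compat_l. left; apply Rinv_0_lt_compat; lra. lra.
  - specialize (S1b Ha). specialize (S2b Ha).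
    replace (PI * Psum p n / p n) with (PI / de) by (rewrite Ed; field; lra). rewrite <- Ed.
    eapply Rle_trans. exact E1.
    replace (2 / PI * (M * 3 + M * (36 * (Kc + 1))) * (de * ln (PI / de))) with
      (/ PI * ((M * 3 + M * (36 * (Kc + 1))) * (de * ln (PI / de)) + (M * 3 + M * (36 * (Kc + 1))) * (de * ln (PI / de)))) by (field; lra).
    apply Rmult_le_compat_l. left; apply Rinv_0_lt_compat; lra. lra. Qed.

Theorem corollary4p3
  (f : R -> R) (alpha beta : R) (p : nat -> R)
  (Hcont : forall x, continuity_pt f x)
  (Hper : forall x, f (x + 2 * PI) = f x)
  (Halpha : 0 < alpha <= 1)
  (* omega(delta) = O(delta^alpha): omega(delta) <= M delta^alpha for all delta > 0 *)
  (Hlip : exists M, forall delta, 0 < delta -> forall h x,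
            Rabs h <= delta -> Rabs (f (x + h) - f x) <= M * Rpower delta alpha)
  (Hp : forall k, 0 <= p k)
  (HP : forall n, Psum p n <> 0)
  (Hbeta : 0 <= beta)
  (Hcond : exists K, forall n m, (m <= n)%nat ->
      sum_lt (fun k => Rpower (INR (k + 1)) beta *
                 Rabs (amat p n k / Rpower (INR (k + 1)) beta
                       - amat p n (k + 1) / Rpower (INR (k + 2)) beta)) m
      <= K * amat p n m) :
  (alpha < 1 -> exists C, forall n x,
      Rabs (Rmean p f n x - f x) <= C * Rpower (p n / Psum p n) alpha)
  /\
  (alpha = 1 -> exists C, forall n x,
      Rabs (Rmean p f n x - f x) <= C * (p n / Psum p n * ln (PI * Psum p n / p n))).
Proof.
  assert (Hc : forall t, continuous f t) by (intros; apply continuity_pt_filterlim; auto).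
  destruct Hlip as [M0 HM0]. destruct Hcond as [K0 HK0].
  set (M := Rabs M0). set (Kc := Rabs K0).
  assert (HM : 0 <= M) by apply Rabs_pos. assert (HK : 0 <= Kc) by apply Rabs_pos.
  assert (Hl : forall x u, 0 < u -> forall h, Rabs h <= u -> Rabs (f (x + h) - f x) <= M * Rpower u alpha).
  { intros x u Hu h Hh. eapply Rle_trans. apply HM0; eauto. apply Rmult_le_compat_r.
    left; apply Rpower_pos. apply Rle_abs. }
  assert (Hcn : forall n, sum_lt (fun k => wt beta k * Rabs (amat p n k / wt beta k - amat p n (S k) / wt beta (S k))) n
     <= Kc * amat p n n).
  { intros n. eapply Rle_trans; [eapply Rle_trans; [|apply (HK0 n n (le_n n))]|].
    - right. apply sum_lt_ext. intros k _. unfold wt.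
      replace (k + 1)%nat with (S k) by lia. replace (k + 2)%nat with (S (S k)) by lia. reflexivity.
    - apply Rmult_le_compat_r. rewrite amat_nn. apply Rmult_le_pos. apply Hp.
      left; apply Rinv_0_lt_compat, Psum_pos; auto. apply Rle_abs. }
  split; intros Ha.
  - exists (2 / PI * (M * 3 / alpha + M * (36 * (Kc + 1)) / (1 - alpha))).
    intros n x. apply (core f p n x beta M Kc alpha); auto.
  - exists (2 / PI * (M * 3 + M * (36 * (Kc + 1)))).
    intros n x. apply (core f p n x beta M Kc alpha); auto.
Qed.
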